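(* Let $P\subset\mathbb Z^n_+$ be a discrete polymatroid and $\alpha=(k_1,\ldots,k_n)\in\mathbb N^n$. Let $\gamma:S_{P^\alpha}\to S_P$ be the $K$-algebra homomorphism with $\gamma(y_{\mathbf u})=y_{\pi_0(\mathbf u)}$ for $\mathbf u\in\mathcal B_{P^\alpha}$. Then $\gamma(I_{P^\alpha})=I_P$.
   Context: $K$ is a field, $\mathbb N$ the positive integers, $\mathbb Z^n_+$ the nonnegative integer vectors; $\mathbf u\preceq\mathbf v$ means componentwise $\le$, $\epsilon_i$ is the $i$th unit vector, $|\mathbf u|=\sum_i\mathbf u(i)$. A discrete polymatroid on $[n]$ is a nonempty finite set $P\subset\mathbb Z^n_+$ such that (D1) if $\mathbf v\in\mathbb Z^n_+$, $\mathbf v\preceq\mathbf u$ for some $\mathbf u\in P$, then $\mathbf v\in P$; (D2) if $\mathbf u,\mathbf v\in P$ with $|\mathbf u|<|\mathbf v|$ then there is $i$ with $\mathbf u(i)<\mathbf v(i)$ and $\mathbf u+\epsilon_i\in P$. A base of $P$ is a $\preceq$-maximal element; $\mathcal B_P$ is the set of bases. $S_P=K[y_{\mathbf u}:\mathbf u\in\mathcal B_P]$, $K[P]=K[\mathbf x^{\mathbf u}:\mathbf u\in\mathcal B_P]\subset K[x_1,\ldots,x_n]$ with $\mathbf x^{\mathbf u}=x_1^{\mathbf u(1)}\cdots x_n^{\mathbf u(n)}$, and $I_P$ is the kernel of $S_P\to K[P]$, $y_{\mathbf u}\mapsto\mathbf x^{\mathbf u}$. For $\alpha=(k_1,\ldots,k_n)$,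 index the coordinates of $\mathbb Z^{|\alpha|}$, $|\alpha|=k_1+\cdots+k_n$, by pairs $(i,j)$, $1\le i\le n$, $1\le j\le k_i$, and let $\pi_0:\mathbb Z^{|\alpha|}\to\mathbb Z^n$, $\pi_0(\mathbf w)(i)=\sum_{j=1}^{k_i}\mathbf w(i,j)$. For $\mathbf u\in\mathbb Z^n_+$ let $\mathbf u^\alpha=\{\mathbf w\in\mathbb Z^{|\alpha|}_+:\pi_0(\mathbf w)=\mathbf u\}$. $P^\alpha\subset\mathbb Z^{|\alpha|}_+$ is the discrete polymatroid whose set of bases is $\mathcal B_{P^\alpha}=\bigcup_{\mathbf u\in\mathcal B_P}\mathbf u^\alpha$; $S_{P^\alpha}$, $K[P^\alpha]$, $I_{P^\alpha}$ are defined analogously (in variables $x_{ij}$). *)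

(* Defs.v *)
From HB Require Import structures.
From mathcomp Require Import all_boot all_order all_algebra.
From mathcomp Require Import finmap.
From mathcomp Require Import mpoly.

Set Implicit Arguments.
Unset Strict Implicit.
Unset Printing Implicit Defensive.

Import GRing.Theory.
Local Open Scope fset_scope.
Local Open Scope ring_scope.

(* Vectors of Z^n_+ are represented by multinomials 'X_{1..n}; u i is the
   i-th coordinate, (u <= v)%MM is the componentwise order, U_(i)%MM the
   i-th unit vector, mdeg u = |u|. *)

Definition is_discrete_polymatroid n (P : {fset 'X_{1..n}}) : Prop :=
  [/\ P != fset0,
      (forall u v : 'X_{1..n}, u \in P -> lem v u -> v \in P) &
      (forall u v : 'X_{1..n}, u \in P -> v \in P -> (mdeg u < mdeg v)%N ->
         exists i : 'I_n, (u i < v i)%N /\ (u + U_(i))%MM \in P)].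

Definition bases n (P : {fset 'X_{1..n}}) : {fset 'X_{1..n}} :=
  [fset u in P | all (fun v => lem u v ==> (v == u)) (enum_fset P)].

(* Variable number j of K[y_0,...,y_{m-1}] (0 if j >= m). *)
Definition yvar (K : comNzRingType) m (j : nat) : {mpoly K[m]} :=
  if @insub nat (fun j => j < m)%N 'I_m j is Some i then 'X_i else 0.

(* Given an enumeration B of a finite set of vectors in Z^d_+, the polynomial
   ring S_B has variables y_0..y_{size B - 1}, y_t standing for y_{B_t}.
   toric_hom B : S_B -> K[x_1..x_d], y_t |-> x^{B_t}; its kernel is the
   toric ideal. *)
Definition toric_hom (K : comNzRingType) d (B : seq 'X_{1..d})
    (p : {mpoly K[size B]}) : {mpoly K[d]} :=
  p \mPo [tuple 'X_[nth 0%MM B i] | i < size B].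
Arguments toric_hom {K d} B p.

Definition toric_ideal (K : comNzRingType) d (B : seq 'X_{1..d})
    (p : {mpoly K[size B]}) : Prop := toric_hom B p = 0.
Arguments toric_ideal {K d} B p.

(* S_P, K[P], I_P for a discrete polymatroid P use the enumeration of B_P. *)
Definition basis_seq n (P : {fset 'X_{1..n}}) : seq 'X_{1..n} :=
  enum_fset (bases P).

(* alpha = (k_1,...,k_n); |alpha| = \sum k_i.  The coordinates of Z^|alpha|
   are the pairs (i,j), 1 <= j <= k_i, listed lexicographically: the pair
   (i,j) is coordinate number  offset i + (j-1)  in 'I_|alpha|. *)
Definition asize n (k : 'I_n -> nat) : nat := (\sum_(i < n) k i)%N.

Definition offset n (k : 'I_n -> nat) (i : 'I_n) : nat :=
  (\sum_(i' < n | (i' < i)%N) k i')%N.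

Definition in_block n (k : 'I_n -> nat) (i : 'I_n) (t : nat) : bool :=
  (offset k i <= t < offset k i + k i)%N.

Definition pi0 n (k : 'I_n -> nat) (w : 'X_{1..asize k}) : 'X_{1..n} :=
  [multinom (\sum_(t < asize k | in_block k i t) w t)%N | i < n].
Arguments pi0 {n} k w.

(* Bases of P^alpha: all w in Z^|alpha|_+ with pi_0 w in B_P.  Since pi_0
   preserves |.|, they all have degree < D := 1 + max degree of a base. *)
Definition alpha_bound n (P : {fset 'X_{1..n}}) : nat :=
  (\max_(u <- basis_seq P) mdeg u).+1.

Definition bases_alpha n (P : {fset 'X_{1..n}}) (k : 'I_n -> nat)
    : {fset 'X_{1..asize k}} :=
  [fset bmnm w | w in [pred w : bmultinom (asize k) (alpha_bound P) |
                       pi0 k (bmnm w) \in bases P]].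

Definition basis_seq_alpha n (P : {fset 'X_{1..n}}) (k : 'I_n -> nat)
    : seq 'X_{1..asize k} := enum_fset (bases_alpha P k).

Definition gamma (K : comNzRingType) n (P : {fset 'X_{1..n}}) (k : 'I_n -> nat)
    (p : {mpoly K[size (basis_seq_alpha P k)]})
    : {mpoly K[size (basis_seq P)]} :=
  p \mPo [tuple yvar K (size (basis_seq P))
             (index (pi0 k (nth 0%MM (basis_seq_alpha P k) t)) (basis_seq P))
          | t < size (basis_seq_alpha P k)].
Arguments gamma {K n P k} p.

(* Main.v *)
Require Import Defs.
From HB Require Import structures.
From mathcomp Require Import all_boot all_order all_algebra.
From mathcomp Require Import finmap.
From mathcomp Require Import mpoly.
Set Implicit Arguments. Unset Strict Implicit. Unset Printing Implicit Defensive.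
Import GRing.Theory.
Local Open Scope fset_scope.
Local Open Scope ring_scope.

Lemma comp_mpolyA (K : comNzRingType) a b c (p : {mpoly K[a]})
   (lq : a.-tuple {mpoly K[b]}) (s : b.-tuple {mpoly K[c]}) :
  (p \mPo lq) \mPo s = p \mPo [tuple (tnth lq i \mPo s) | i < a].
Proof.
rewrite (comp_mpolyEX p lq) (comp_mpolyEX p) raddf_sum; apply: eq_bigr => m _.
rewrite /= comp_mpolyZ !comp_mpolyX rmorph_prod; congr (_ *: _); apply: eq_bigr => i _.
by rewrite rmorphXn tnth_mktuple.
Qed.

Lemma mpolyX_sum (K : comNzRingType) N (I : finType) (F : I -> 'X_{1..N}) :
  \prod_i ('X_[F i] : {mpoly K[N]}) = 'X_[(\sum_i F i)%MM].
Proof.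
by rewrite (big_morph (fun m => ('X_[m] : {mpoly K[N]})) (@mpolyXD _ _) (@mpolyX0 _ _)).
Qed.

Section Pi.
Variables (n : nat) (k : 'I_n -> nat).

Lemma pi0E w i : pi0 k w i = (\sum_(t < asize k | in_block k i t) w t)%N.
Proof. by rewrite /pi0 mnmE. Qed.

Lemma pi0D w1 w2 : pi0 k (w1 + w2)%MM = (pi0 k w1 + pi0 k w2)%MM.
Proof. by apply/mnmP => i; rewrite mnmDE !pi0E -big_split; apply: eq_bigr => t _; rewrite mnmDE. Qed.

Lemma pi00 : pi0 k 0%MM = 0%MM.
Proof. by apply/mnmP => i; rewrite mnm0E pi0E big1 // => t _; rewrite mnm0E. Qed.

Lemma pi0Mn w c : pi0 k (w *+ c)%MM = (pi0 k w *+ c)%MM.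
Proof. by apply/mnmP => i; rewrite mulmnE !pi0E big_distrl; apply: eq_bigr => t _; rewrite mulmnE. Qed.

Lemma pi0_sum (I : finType) (F : I -> 'X_{1..asize k}) :
  pi0 k (\sum_i F i)%MM = (\sum_i pi0 k (F i))%MM.
Proof. exact: (big_morph _ pi0D pi00). Qed.

Lemma pi0U t i : pi0 k U_(t)%MM i = in_block k i t.
Proof.
rewrite pi0E big_mkcond (bigD1 t) //= big1 ?addn0.
  by rewrite mnm1E eqxx; case: in_block.
by move=> j /negbTE njt; rewrite mnm1E eq_sym njt; case: in_block.
Qed.
End Pi.
Section Off.
Variables (n : nat) (k : 'I_n -> nat).

Lemma sum_sub (P Q : pred 'I_n) : (forall i, P i -> Q i) ->
  (\sum_(i | P i) k i <= \sum_(i | Q i) k i)%N.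
Proof.
move=> PQ; rewrite [X in (X <= _)%N]big_mkcond [X in (_ <= X)%N]big_mkcond.
apply: leq_sum => i _; case: (boolP (P i)) => [/PQ -> //|_]; by case: (Q i).
Qed.

Lemma offsetS i : (offset k i + k i = \sum_(i' < n | (i' <= i)%N) k i')%N.
Proof.
rewrite (bigD1 i) //= addnC; congr (_ + _)%N; apply: eq_bigl => j.
by rewrite ltn_neqAle andbC.
Qed.

Lemma offset_le (i j : 'I_n) : (i < j)%N -> (offset k i + k i <= offset k j)%N.
Proof.
move=> lij; rewrite offsetS; apply: sum_sub => l /= lli; exact: leq_ltn_trans lli lij.
Qed.

Lemma offset_lt (i : 'I_n) : (offset k i + k i <= asize k)%N.
Proof. by rewrite offsetS; apply: sum_sub. Qed.

Lemma in_block_offset (i j : 'I_n) : (0 < k i)%N -> in_block k j (offset k i) = (j == i).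
Proof.
move=> ki; rewrite /in_block.
case: (ltngtP j i) => [lji|lij|/val_inj ->].
- have := offset_le lji => h; rewrite ltnNge (leq_trans h) ?andbF //.
  by case: eqP lji => // ->; rewrite ltnn.
- have := offset_le lij => h. rewrite leqNgt (leq_trans _ h) //.
    by case: eqP lij => // ->; rewrite ltnn.
  by rewrite -{1}[offset k i]addn0 ltn_add2l.
- by rewrite eqxx leqnn /= -{1}[offset k i]addn0 ltn_add2l.
Qed.
End Off.

Lemma yvarE (K : comNzRingType) m j (h : (j < m)%N) : yvar K m j = 'X_(Ordinal h).
Proof. by rewrite /yvar insubT. Qed.

Section Main.
Variables (K : fieldType) (n : nat) (P : {fset 'X_{1..n}}) (k : 'I_n -> nat).
Hypothesis hk : forall i, (0 < k i)%N.

Lemma first_lt (i : 'I_n) : (offset k i < asize k)%N.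
Proof. by apply: leq_trans (offset_lt k i); rewrite -{1}[offset k i]addn0 ltn_add2l. Qed.

Definition first (i : 'I_n) : 'I_(asize k) := Ordinal (first_lt i).

Definition sig (u : 'X_{1..n}) : 'X_{1..asize k} := (\sum_i U_(first i) *+ u i)%MM.
Definition psi := [tuple ('X_[pi0 k U_(t)] : {mpoly K[n]}) | t < asize k].
Definition phi := [tuple ('X_[U_(first i)] : {mpoly K[asize k]}) | i < n].

Lemma Xpsi w : 'X_[w] \mPo psi = 'X_[pi0 k w].
Proof.
rewrite comp_mpolyX; under eq_bigr do rewrite tnth_mktuple mpolyXn.
rewrite mpolyX_sum; congr 'X_[_]; rewrite {2}(multinomUE_id w) pi0_sum.
by apply: eq_bigr => t _; rewrite pi0Mn.
Qed.

Lemma Xphi u : 'X_[u] \mPo phi = 'X_[sig u].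
Proof.
rewrite comp_mpolyX; under eq_bigr do rewrite tnth_mktuple mpolyXn.
by rewrite mpolyX_sum.
Qed.

Lemma pi0_sig u : pi0 k (sig u) = u.
Proof.
rewrite /sig pi0_sum {2}(multinomUE_id u); apply: eq_bigr => i _; rewrite pi0Mn.
congr (_ *+ _)%MM; apply/mnmP => j; rewrite pi0U mnm1E /= in_block_offset //.
by rewrite eq_sym.
Qed.

Lemma mdeg_sig u : mdeg (sig u) = mdeg u.
Proof.
rewrite /sig mdeg_sum mdegE; apply: eq_bigr => i _; by rewrite mdegMn mdeg1 mul1n.
Qed.

Notation Bp := (basis_seq P).
Notation Ba := (basis_seq_alpha P k).

Lemma mem_Ba w : w \in Ba -> pi0 k w \in Bp.
Proof.
move=> h; have : w \in bases_alpha P k by [].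
case/imfsetP => w' /= hw' ->; exact: hw'.
Qed.

Lemma sig_Ba u : u \in Bp -> sig u \in Ba.
Proof.
move=> hu; have hb : (mdeg (sig u) < alpha_bound P)%N.
  by rewrite mdeg_sig /alpha_bound ltnS (leq_bigmax_seq (F := fun u => mdeg u) _ hu).
suff : sig u \in bases_alpha P k by [].
apply/imfsetP; exists (BMultinom hb) => //=; rewrite unfold_in /= pi0_sig; exact: hu.
Qed.

End Main.
Lemma yvar_toric (K : fieldType) d (B : seq 'X_{1..d}) u : u \in B ->
  yvar K (size B) (index u B) \mPo [tuple ('X_[nth 0%MM B i] : {mpoly K[d]}) | i < size B]
  = 'X_[u].
Proof.
move=> hu; have hi : (index u B < size B)%N by rewrite index_mem.
rewrite (yvarE _ hi) comp_mpolyXU (nth_map (Ordinal hi)) ?size_enum_ord //.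
by rewrite nth_ord_enum /= nth_index.
Qed.
Theorem lemma2p3 (K : fieldType) (n : nat) (P : {fset 'X_{1..n}})
    (k : 'I_n -> nat) :
  is_discrete_polymatroid P ->
  (forall i : 'I_n, (0 < k i)%N) ->
  (forall p : {mpoly K[size (basis_seq_alpha P k)]},
      toric_ideal (basis_seq_alpha P k) p ->
      toric_ideal (basis_seq P) (gamma p)) /\
  (forall q : {mpoly K[size (basis_seq P)]},
      toric_ideal (basis_seq P) q ->
      exists2 p : {mpoly K[size (basis_seq_alpha P k)]},
        toric_ideal (basis_seq_alpha P k) p & gamma p = q).
Proof.
move=> _ hk; split.
  move=> p hp; rewrite /toric_ideal /toric_hom /gamma comp_mpolyA.
  transitivity (toric_hom (basis_seq_alpha P k) p \mPo psi K k); last first.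
    by rewrite hp comp_mpoly0.
  rewrite /toric_hom comp_mpolyA; congr (p \mPo _); apply: eq_mktuple => t.
  rewrite !tnth_mktuple Xpsi yvar_toric //; apply: mem_Ba; exact: mem_nth (ltn_ord t).
move=> q hq.
exists (q \mPo [tuple yvar K (size (basis_seq_alpha P k))
   (index (sig hk (nth 0%MM (basis_seq P) s)) (basis_seq_alpha P k)) | s < size (basis_seq P)]).
  rewrite /toric_ideal /toric_hom comp_mpolyA.
  transitivity (toric_hom (basis_seq P) q \mPo phi K hk); last first.
    by rewrite hq comp_mpoly0.
  rewrite /toric_hom comp_mpolyA; congr (q \mPo _); apply: eq_mktuple => s.
  rewrite !tnth_mktuple Xphi yvar_toric //; apply: sig_Ba; exact: mem_nth (ltn_ord s).
rewrite /gamma comp_mpolyA -[RHS]comp_mpoly_id; congr (q \mPo _); apply: eq_mktuple => s.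
have hs : nth 0%MM (basis_seq P) s \in basis_seq P by exact: mem_nth (ltn_ord s).
have hsa := sig_Ba hk hs.
have hi : (index (sig hk (nth 0%MM (basis_seq P) s)) (basis_seq_alpha P k) <
   size (basis_seq_alpha P k))%N by rewrite index_mem.
rewrite tnth_mktuple (yvarE _ hi) comp_mpolyXU (nth_map (Ordinal hi)) ?size_enum_ord //.
rewrite nth_ord_enum /= nth_index // pi0_sig index_uniq ?fset_uniq //.
by rewrite (yvarE _ (ltn_ord s)); congr 'X_ _; apply: val_inj.
Qed.
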